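(* Let $M=(S,\mathrm{Act},P)$ be an MDP and $T\subseteq S$. Let $(x,r)\in[0,1]^S\times\mathbb{N}_\infty^S$ satisfy: (1) $D^{\max}(r)\le r$; (2) $x\le B^{\min}(x)$; (3) for all $s\in S\setminus T$, $x(s)>0$ implies $r(s)<\infty$ (all inequalities between functions pointwise). Then $\Pr^{\min}_s(\Diamond T)\ge x(s)$ for all $s\in S$.
   Context: An MDP is a tuple $M=(S,\mathrm{Act},P)$ with $S$ finite, $\mathrm{Act}$ finite, $P\colon S\times\mathrm{Act}\times S\to[0,1]$ with $\sum_{s'}P(s,a,s')\in\{0,1\}$; $\mathrm{Act}(s)=\{a\mid\sum_{s'}P(s,a,s')=1\}$ is nonempty for all $s$; $\mathrm{Post}(s,a)=\{s'\mid P(s,a,s')>0\}$. A strategy is $\sigma\colon S\to\mathrm{Act}$ with $\sigma(s)\in\mathrm{Act}(s)$, inducing a Markov chain with transitions $P(s,\sigma(s),\cdot)$; $\Pr^\sigma_s(\Diamond T)$ is the probability of visiting $T$ from $s$ and $\Pr^{\min}_s(\Diamond T)=\min_\sigma\Pr^\sigma_s(\Diamond T)$. $\mathbb{N}_\infty=\mathbb{N}\cup\{\infty\}$, $1+\infty=\infty$. $D^{\max}(r)(s)=0$ for $s\in T$ and $1+\max_{a\in\mathrm{Act}(s)}\min_{s'\in\mathrm{Post}(s,a)}r(s')$ for $s\notin T$. $B^{\min}(x)(s)=1$ for $s\in T$ and $\min_{a\in\mathrm{Act}(s)}\sum_{s'\in\mathrm{Post}(s,a)}P(s,a,s')x(s')$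 for $s\notin T$. *)

(* Defs.v *)
From mathcomp Require Import all_boot all_order all_algebra.
From mathcomp Require Import classical_sets boolp reals.
Set Implicit Arguments. Unset Strict Implicit. Unset Printing Implicit Defensive.
Import Order.TTheory GRing.Theory Num.Theory.
Local Open Scope ring_scope.
Local Open Scope classical_set_scope.

Section MDP.
Context {R : realType} {S A : finType}.

Definition is_MDP (P : S -> A -> S -> R) : Prop :=
  (forall s a s', 0 <= P s a s' <= 1) /\
  (forall s a, \sum_(s' : S) P s a s' = 0 \/ \sum_(s' : S) P s a s' = 1) /\
  (forall s, exists a, \sum_(s' : S) P s a s' = 1).

Definition Act (P : S -> A -> S -> R) (s : S) (a : A) : bool :=
  \sum_(s' : S) P s a s' == 1.

Definition Post (P : S -> A -> S -> R) (s : S) (a : A) (s' : S) : bool :=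
  0 < P s a s'.

Definition is_strategy (P : S -> A -> S -> R) (sigma : S -> A) : Prop :=
  forall s, Act P s (sigma s).

Fixpoint reach_within (P : S -> A -> S -> R) (T : {set S}) (sigma : S -> A)
    (n : nat) (s : S) : R :=
  if s \in T then 1 else
  match n with
  | 0 => 0
  | n'.+1 => \sum_(s' : S) P s (sigma s) s' * reach_within P T sigma n' s'
  end.

(* Pr^sigma_s(<> T): probability of eventually visiting T
   (= sup over n of the probability of visiting T within n steps,
    by continuity of the path measure). *)
Definition Pr_reach (P : S -> A -> S -> R) (T : {set S}) (sigma : S -> A)
    (s : S) : R :=
  sup (range (fun n => reach_within P T sigma n s)).

(* Pr^min_s(<> T) = min over strategies (a finite nonempty set, so inf = min). *)
Definition Pr_min_reach (P : S -> A -> S -> R) (T : {set S}) (s : S) : R :=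
  inf [set Pr_reach P T sigma s | sigma in is_strategy P].

(* N_infty = nat + {infty}, encoded as option nat with None = infty. *)
Definition ninf := option nat.
Definition ninf_le (a b : ninf) : bool :=
  match a, b with
  | _, None => true
  | None, Some _ => false
  | Some m, Some n => (m <= n)%N
  end.
Definition ninf_min (a b : ninf) : ninf := if ninf_le a b then a else b.
Definition ninf_max (a b : ninf) : ninf := if ninf_le a b then b else a.
Definition ninf_succ (a : ninf) : ninf := omap succn a.

(* D^max(r)(s) = 0 if s in T,
   1 + max_{a in Act(s)} min_{s' in Post(s,a)} r(s') otherwise.
   (Act(s) and Post(s,a) are nonempty, so the neutral elements 0 and infty
    of the max/min are never the result of an empty max/min.) *)
Definition Dmax (P : S -> A -> S -> R) (T : {set S}) (r : S -> ninf) (s : S)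
  : ninf :=
  if s \in T then Some 0%N else
  ninf_succ (\big[ninf_max/Some 0%N]_(a | Act P s a)
               \big[ninf_min/None]_(s' | Post P s a s') r s').

(* B^min(x)(s) = 1 if s in T,
   min_{a in Act(s)} sum_{s' in Post(s,a)} P(s,a,s') x(s') otherwise.
   (Act(s) is nonempty; the min is taken via the real infimum of the
    finite nonempty set of values.) *)
Definition Bmin (P : S -> A -> S -> R) (T : {set S}) (x : S -> R) (s : S) : R :=
  if s \in T then 1 else
  inf [set (\sum_(s' | Post P s a s') P s a s' * x s') | a in [set a | Act P s a]].

End MDP.

(* Main.v *)
Require Import Defs.
From mathcomp Require Import all_boot all_order all_algebra.
From mathcomp Require Import classical_sets boolp reals.
Local Open Scope classical_set_scope.
Import Order.TTheory GRing.Theory Num.Theory.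
Local Open Scope ring_scope.

Lemma ninf_le_trans (a b c : ninf) : ninf_le a b -> ninf_le b c -> ninf_le a c.
Proof. by case: a b c => [a|] [b|] [c|] //=; apply: leq_trans. Qed.

Lemma ninf_le_maxl (a b : ninf) : ninf_le a (ninf_max a b).
Proof.
rewrite /ninf_max; case: a b => [a|] [b|] //=; case: ifP => //=.
Qed.

Lemma ninf_le_maxr (a b : ninf) : ninf_le b (ninf_max a b).
Proof.
rewrite /ninf_max; case: a b => [a|] [b|] //=; case: ifP => //=.
by move/negbT; rewrite -ltnNge => /ltnW.
Qed.

Lemma big_max_ge (I : eqType) (l : seq I) (p : pred I) (F : I -> ninf) j :
  j \in l -> p j -> ninf_le (F j) (\big[ninf_max/Some 0%N]_(i <- l | p i) F i).
Proof.
elim: l => // i l IH; rewrite inE big_cons => /orP [/eqP <- | jl] pj.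
  by rewrite pj ninf_le_maxl.
case: (p i); last exact: IH.
exact: ninf_le_trans (IH jl pj) (ninf_le_maxr _ _).
Qed.

Lemma big_min_le (I : eqType) (l : seq I) (p : pred I) (F : I -> ninf) m :
  ninf_le (\big[ninf_min/None]_(i <- l | p i) F i) (Some m) ->
  exists2 i, p i & ninf_le (F i) (Some m).
Proof.
elim: l => [|i l IH]; first by rewrite big_nil.
rewrite big_cons; case: ifP => pi //.
rewrite /ninf_min; case: ifP => _ H; first by exists i.
exact: IH.
Qed.

Theorem proposition4 (R : realType) (S A : finType) (P : S -> A -> S -> R)
    (T : {set S}) (x : S -> R) (r : S -> ninf) :
  is_MDP P ->
  (forall s, 0 <= x s <= 1) ->
  (forall s, ninf_le (Dmax P T r s) (r s)) ->
  (forall s, x s <= Bmin P T x s) ->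
  (forall s, s \notin T -> 0 < x s -> r s <> None) ->
  forall s, x s <= Pr_min_reach P T s.
Proof.
move=> [HP01 [_ HAct]] Hx01 HD HB Hr s.
have P0 : forall s a s', 0 <= P s a s' by move=> s1 a s'; case/andP: (HP01 s1 a s').
have key : forall sigma, is_strategy P sigma -> forall s, x s <= Pr_reach P T sigma s.
  move=> sigma Hsig.
  have Psum : forall s, \sum_u P s (sigma s) u = 1 by move=> u; apply/eqP; exact: Hsig.
  pose y n u := reach_within P T sigma n u.
  have yS : forall n u, u \notin T ->
      y n.+1 u = \sum_v P u (sigma u) v * y n v.
    by move=> n u hu; rewrite /y /= (negbTE hu).
  have yT : forall n u, u \in T -> y n u = 1.
    by move=> [|n] u hu; rewrite /y /= hu.
  have ybd : forall n u, 0 <= y n u <= 1.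
    elim=> [|n IH] u.
      by rewrite /y /=; case: (u \in T) => //; rewrite lexx ler01.
    case hu: (u \in T); first by rewrite yT // lexx ler01.
    rewrite yS ?hu //; apply/andP; split.
      by apply: sumr_ge0 => v _; apply: mulr_ge0 => //; case/andP: (IH v).
    rewrite -(Psum u); apply: ler_sum => v _.
    by rewrite -{2}(mulr1 (P _ _ _)); apply: ler_wpM2l => //; case/andP: (IH v).
  have ymono : forall n u, y n u <= y n.+1 u.
    elim=> [|n IH] u.
      case hu: (u \in T); first by rewrite !yT ?hu.
      by rewrite /y /= hu; apply: sumr_ge0 => v _; apply: mulr_ge0 => //; case/andP: (ybd 0%N v).
    case hu: (u \in T); first by rewrite !yT ?hu.
    rewrite !yS ?hu //; apply: ler_sum => v _; exact: ler_wpM2l.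
  have ymonoN : forall n m u, (n <= m)%N -> y n u <= y m u.
    move=> n m u; elim: m => [|m IH] H.
      by rewrite leqn0 in H; move/eqP: H ->.
    rewrite leq_eqVlt ltnS in H; case/orP: H => [/eqP -> // | H].
    exact: le_trans (IH H) (ymono _ _).
  pose z u := Pr_reach P T sigma u.
  have hub : forall u, has_ubound (range (fun n => y n u)).
    by move=> u; exists 1 => v [n _ <-]; case/andP: (ybd n u).
  have hne : forall u, range (fun n => y n u) !=set0.
    by move=> u; exists (y 0%N u); exists 0%N.
  have yz : forall n u, y n u <= z u.
    by move=> n u; apply: (ub_le_sup (hub u)); exists n.
  have z1 : forall u, z u <= 1.
    by move=> u; apply: ge_sup => // v [n _ <-]; case/andP: (ybd n u).
  have zT : forall u, u \in T -> z u = 1.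
    by move=> u hu; apply/le_anti; rewrite z1 /= -(yT 0%N u hu) yz.
  have zsub : forall u, u \notin T -> \sum_v P u (sigma u) v * z v <= z u.
    move=> u hu; apply/ler_addgt0Pr => e e0.
    have [N HN] : exists N, forall v, z v - e < y N v.
      suff: forall l : seq S, exists N, forall v, v \in l -> z v - e < y N v.
        by move/(_ (enum S)) => [N HN]; exists N => v; apply: HN; rewrite mem_enum.
      elim=> [|v l [N HN]]; first by exists 0%N.
      have [w [n _ <-] hw] := sup_adherent e0 (conj (hne v) (hub v)).
      exists (maxn n N) => v'; rewrite inE => /orP [/eqP -> | vl].
        exact: lt_le_trans hw (ymonoN _ _ _ (leq_maxl _ _)).
      exact: lt_le_trans (HN v' vl) (ymonoN _ _ _ (leq_maxr _ _)).
    apply: (@le_trans _ _ (y N.+1 u + e)); last by rewrite lerD2r yz.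
    rewrite yS // -[e in _ + e]mul1r -(Psum u) mulr_suml -big_split /=.
    apply: ler_sum => v _; rewrite -mulrDr; apply: ler_wpM2l => //.
    by apply: ltW; rewrite -ltrBlDr.
  have xsub : forall u, u \notin T -> x u <= \sum_v P u (sigma u) v * x v.
    move=> u hu; apply: le_trans (HB u) _; rewrite /Bmin (negbTE hu).
    have -> : \sum_v P u (sigma u) v * x v =
              \sum_(v | Post P u (sigma u) v) P u (sigma u) v * x v.
      rewrite [RHS]big_mkcond; apply: eq_bigr => v _; case: ifP => // /negbT.
      rewrite /Post -leNgt => hle.
      have -> : P u (sigma u) v = 0 by apply/le_anti; rewrite hle P0.
      by rewrite mul0r.
    apply: ge_inf; last by exists (sigma u) => //; exact: Hsig.
    exists 0 => v [a _ <-]; apply: sumr_ge0 => b _; apply: mulr_ge0 => //.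
    by case/andP: (Hx01 b).
  pose w u := x u - z u.
  have wT : forall u, u \in T -> w u <= 0.
    by move=> u hu; rewrite /w zT // subr_le0; case/andP: (Hx01 u).
  have wsub : forall u, u \notin T -> w u <= \sum_v P u (sigma u) v * w v.
    move=> u hu; rewrite /w.
    under eq_bigr => v _ do rewrite mulrBr.
    by rewrite sumrB; apply: lerB; [exact: xsub | exact: zsub].
  have rank : forall u k, u \notin T -> r u = Some k ->
      exists v, [/\ 0 < P u (sigma u) v, r v <> None & forall j, r v = Some j -> (j < k)%N].
    move=> u k hu hr; have := HD u; rewrite /Dmax (negbTE hu) hr.
    set M := \big[ninf_max/Some 0%N]_(a | Act P u a) _.
    case HM: M => [m|] //= hmk.
    have := @big_max_ge A (index_enum A) (Act P u)
      (fun a => \big[ninf_min/None]_(s' | Post P u a s') r s') (sigma u)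
      (mem_index_enum _) (Hsig u).
    rewrite -/M HM => /big_min_le [v hv].
    case hrv: (r v) => [j|] //= hjm; exists v; split => //; rewrite hrv //.
    by move=> j0 [<-]; apply: leq_ltn_trans hjm hmk.
  have [s0 Hs0] : exists s0, forall u, w u <= w s0.
    suff: forall l : seq S, exists s0, forall u, u \in l -> w u <= w s0.
      by move/(_ (enum S)) => [s0 H]; exists s0 => u; apply: H; rewrite mem_enum.
    elim=> [|v l [s1 H]]; first by exists s.
    case: (lerP (w v) (w s1)) => hv.
      by exists s1 => u; rewrite inE => /orP [/eqP -> | ul] //; apply: H.
    exists v => u; rewrite inE => /orP [/eqP -> | ul] //.
    exact: le_trans (H u ul) (ltW hv).
  have ws0 : w s0 <= 0.
    rewrite leNgt; apply/negP => m0.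
    have zge0 : forall u, 0 <= z u by move=> u; apply: le_trans (yz 0%N u); case/andP: (ybd 0%N u).
    have nT : forall u, w s0 <= w u -> u \notin T.
      move=> u hu; apply/negP => uT; have := wT u uT.
      by rewrite leNgt (lt_le_trans m0 hu).
    have xpos : forall u, w s0 <= w u -> 0 < x u.
      move=> u hu; apply: lt_le_trans m0 (le_trans hu _).
      by rewrite /w lerBlDr lerDl.
    have claim : forall k u, r u = Some k -> w u < w s0.
      elim/ltn_ind => k IH u hr; rewrite ltNge; apply/negP => hu.
      have [v [Pv _ Hv]] := rank u k (nT u hu) hr.
      have wv : w v < w s0.
        case hrv: (r v) => [j|]; first by apply: (IH j (Hv j hrv)).
        rewrite ltNge; apply/negP => hv.
        by apply: (Hr v (nT v hv) (xpos v hv)).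
      have : w u <= \sum_v' P u (sigma u) v' * w v' := wsub u (nT u hu).
      have -> : \sum_v' P u (sigma u) v' * w v' =
          \sum_v' P u (sigma u) v' * (w v' - w s0) + w s0.
        under [X in _ = X + _]eq_bigr => v' _ do rewrite mulrBr.
        by rewrite sumrB -mulr_suml Psum mul1r subrK.
      rewrite (bigD1 v) //=.
      have h1 : P u (sigma u) v * (w v - w s0) < 0.
        by rewrite pmulr_rlt0 // subr_lt0.
      have h2 : \sum_(i | i != v) P u (sigma u) i * (w i - w s0) <= 0.
        apply: sumr_le0 => i _; apply: mulr_ge0_le0 => //.
        by rewrite subr_le0.
      move=> H; have h3 := ltr_leD h1 h2; rewrite addr0 in h3.
      by have := le_trans hu H; rewrite -lerBlDr subrr leNgt h3.
    case hr0: (r s0) => [k|].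
      by have := claim k s0 hr0; rewrite ltxx.
    by apply: (Hr s0 (nT s0 (lexx _)) (xpos s0 (lexx _))).
  move=> u; rewrite -subr_le0; exact: le_trans (Hs0 u) ws0.
apply: lb_le_inf.
  have [a0 _] := HAct s.
  pose sig u := odflt a0 [pick b | Act P u b].
  exists (Pr_reach P T sig s); exists sig => //.
  move=> u; rewrite /sig; case: pickP => //= H.
  by have [b hb] := HAct u; have := H b; rewrite /Act hb eqxx.
by move=> v [sig Hsig <-]; apply: key.
Qed.
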